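(* Let $n\ge 2$. (i) Every polynomial $f$ of degree $n$ which can be written as $f=gh$ with $g,h$ nonconstant integer-valued polynomials satisfies $P^+(f)\le n$. (ii) There exists a polynomial $f\in\mathbb{Z}[x]$ of degree $n$, reducible in $\mathbb{Q}[x]$, with $P^+(f)=n$. Consequently, the maximum of $P^+(f)$ over polynomials of degree $n$ that are products of two nonconstant integer-valued polynomials, and also over polynomials in $\mathbb{Z}[x]$ of degree $n$ that are reducible in $\mathbb{Q}[x]$, is exactly $n$.
   Context: A polynomial $f\in\mathbb{Q}[x]$ is integer-valued if $f(m)\in\mathbb{Z}$ for every $m\in\mathbb{Z}$. $P^+(f)=\#\{m\in\mathbb{Z}: f(m)>0\text{ and } f(m)\text{ is a prime number}\}$. *)

(* Defs.v *)
From HB Require Import structures.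
From mathcomp Require Import all_boot all_order all_algebra.
Set Implicit Arguments. Unset Strict Implicit. Unset Printing Implicit Defensive.
Import Order.TTheory GRing.Theory Num.Theory.
Local Open Scope ring_scope.

(* Polynomials over Q are {poly rat}; "degree n" is size f = n.+1. *)

Definition int_valued (f : {poly rat}) : Prop :=
  forall m : int, exists z : int, f.[m%:~R] = z%:~R.

Definition int_coeffs (f : {poly rat}) : Prop :=
  forall i : nat, exists z : int, f`_i = z%:~R.

Definition prime_value_at (f : {poly rat}) (m : int) : Prop :=
  exists p : nat, prime p /\ f.[m%:~R] = p%:R.

(* P^+(f) <= k : every finite set of integers m with f(m) a positive prime
   has at most k elements (in particular the set is finite). *)
Definition Pplus_le (f : {poly rat}) (k : nat) : Prop :=
  forall s : seq int, uniq s -> (forall m, m \in s -> prime_value_at f m) ->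
    (size s <= k)%N.

Definition Pplus_eq (f : {poly rat}) (k : nat) : Prop :=
  Pplus_le f k /\
  exists s : seq int, [/\ uniq s, (forall m, m \in s -> prime_value_at f m)
                        & size s = k].

(* Main.v *)
Require Import Defs.
From HB Require Import structures.
From mathcomp Require Import all_boot all_order all_algebra all_field.
From mathcomp Require Import polyrcf realalg.
From mathcomp Require Import zify lra ring.
From Stdlib Require Import Classical.
Set Implicit Arguments. Unset Strict Implicit. Unset Printing Implicit Defensive.
Import Order.TTheory GRing.Theory Num.Theory.
Local Open Scope ring_scope.

Inductive sg := SN | SZ | SP.
Definition oppb (a b : sg) := match a, b with SN, SP | SP, SN => true | _, _ => false end.
Definition isz (a : sg) := match a with SZ => true | _ => false end.

Fixpoint evs (s : seq sg) : nat :=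
  match s with
  | x :: t => (isz x + (if t is y :: _ then oppb x y else false) + evs t)%N
  | [::] => 0%N
  end.

Inductive typ := GP | GM | HP | HM.
Definition typ_eqb (X Y : typ) := match X, Y with
  GP,GP|GM,GM|HP,HP|HM,HM => true | _,_ => false end.

Definition allowed (X Y : typ) (a b : sg) : bool :=
  match X, Y, a, b with
  | GP, GP, SZ, _ => true
  | GM, GM, SZ, _ => true
  | HP, HP, _, SZ => true
  | HM, HM, _, SZ => true
  | GP, GM, SN, SN => true
  | GP, HP, SP, SN => true
  | GP, HM, SN, SN => true
  | GM, GP, SP, SP => true
  | GM, HP, SP, SP => true
  | GM, HM, SN, SP => true
  | HP, GP, SN, SP => true
  | HP, GM, SN, SN => true
  | HP, HM, SN, SN => true
  | HM, GP, SP, SP => true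
  | HM, GM, SP, SN => true
  | HM, HP, SP, SP => true
  | _, _, _, _ => false
  end.

Definition Hf (X Y : typ) (a b : sg) : bool :=
  match X, Y, a, b with
  | GP,GP,SZ,SZ | GP,GP,SZ,SP | GM,GM,SZ,SZ | GM,GM,SZ,SN
  | HP,HP,SZ,SZ | HP,HP,SP,SZ | HM,HM,SZ,SZ | HM,HM,SN,SZ => true
  | _,_,_,_ => false
  end.

Lemma base_ok X Y a b : allowed X Y a b -> (Hf X Y a b <= isz a + isz b)%N.
Proof. by case: X; case: Y; case: a; case: b. Qed.

Lemma step_ok X Y Z a b a' b' : allowed X Y a b -> allowed Y Z a' b' ->
  (1 + Hf X Y a b <= isz a + oppb a a' + isz b + oppb b b' + Hf Y Z a' b')%N.
Proof. by case: X; case: Y; case: Z; case: a; case: b; case: a'; case: b'. Qed.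


Section RealPart.
Variable R : rcfType.

Definition tosg (x : R) : sg := if x == 0 then SZ else if x < 0 then SN else SP.

Fixpoint diffs (s : seq R) : seq R :=
  match s with
  | x :: ((y :: _) as t) => (y - x) :: diffs t
  | _ => [::]
  end.

Lemma tosgM_pos (x y : R) : 0 < y -> tosg (x * y) = tosg x.
Proof.
move=> y0; rewrite /tosg mulf_eq0 (gt_eqF y0) orbF pmulr_llt0 //.
Qed.

Lemma isz_tosg (x : R) : isz (tosg x) = (x == 0).
Proof. by rewrite /tosg; case: eqP => //; case: ltP. Qed.

Lemma oppb_tosg (x y : R) : oppb (tosg x) (tosg y) = (x * y < 0).
Proof.
rewrite mulr_lt0 /tosg.
case: (x =P 0) => [->|_]; case: (y =P 0) => [->|_] //=; try by case: ltP.
by case: (x < 0); case: (y < 0).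
Qed.


Lemma sorted_cons_lt (c : R) (s : seq R) : all (fun x => c < x) s -> sorted <%R s ->
  sorted <%R (c :: s).
Proof.
move=> a ss; rewrite /= (path_sortedE lt_trans); apply/andP; split => //.
Qed.

Lemma stage1 (p : {poly R}) (ts : seq R) : sorted <%R ts ->
  exists xis : seq R, [/\ sorted <%R xis, all (fun x => head 0 ts < x) xis &
     map (fun x => tosg p^`().[x]) xis = map tosg (diffs (map (horner p) ts))].
Proof.
elim: ts => [|t0 ts IH] /=; first by move=> _; exists [::].
case: ts IH => [|t1 ts] IH /= Hs; first by exists [::].
move: Hs => /andP[lt01 Hs]; have [xis [sx ax ex]] := IH Hs.
have [c cin Hc] := poly_mvt p lt01.
move: cin; rewrite in_itv /= => /andP[c0 c1].
exists (c :: xis); split.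
- apply: sorted_cons_lt => //; apply/allP => x xin.
  by apply: lt_trans c1 _; move/allP: ax => /(_ x xin).
- rewrite /= c0 /=; apply/allP => x xin.
  by apply: lt_trans (lt_trans c0 c1) _; move/allP: ax => /(_ x xin).
- rewrite /= ex; congr (_ :: _).
  by rewrite Hc tosgM_pos // subr_gt0.
Qed.

Lemma stage2 (q : {poly R}) (xs : seq R) : sorted <%R xs ->
  exists rs, [/\ sorted <%R rs, all (root q) rs, all (fun r => head 0 xs <= r) rs &
    (evs (map (fun x => tosg q.[x]) xs) <= size rs)%N].
Proof.
elim: xs => [|x0 xs IH]; first by move=> _; exists [::].
case: xs IH => [|x1 xs] IH Hs.
  case: (boolP (q.[x0] == 0)) => q0.
  - by exists [:: x0]; split; rewrite /= ?lexx ?isz_tosg ?rootE ?q0.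
  - exists [::]; split => //=; by rewrite isz_tosg (negbTE q0).
have /andP[lt01 Hs'] : (x0 < x1) && sorted <%R (x1 :: xs) := Hs.
have [rs [sr ar hr er]] := IH Hs'.
have hr' : all (fun r => x0 < r) rs.
  apply/allP => r rin; move/allP: hr => /(_ r rin) /=; exact: lt_le_trans.
set E := evs _ in er.
have -> : evs (map (fun x => tosg q.[x]) (x0 :: x1 :: xs)) =
   (isz (tosg q.[x0]) + oppb (tosg q.[x0]) (tosg q.[x1]) + E)%N by [].
rewrite isz_tosg oppb_tosg.
case: (boolP (q.[x0] == 0)) => q0.
  exists (x0 :: rs); split.
  - exact: sorted_cons_lt.
  - by rewrite /= rootE q0.
  - rewrite /= lexx /=; apply/allP => r rin; move/allP: hr' => /(_ r rin); exact: ltW.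
  - by move: er; rewrite (eqP q0) mul0r ltxx /=; lia.

case: (boolP (q.[x0] * q.[x1] < 0)) => qm.
  have [c cin rc] := poly_ivtoo (ltW lt01) qm.
  move: cin; rewrite in_itv /= => /andP[c0 c1].
  exists (c :: rs); split.
  - apply: sorted_cons_lt => //; apply/allP => r rin.
    by apply: lt_le_trans c1 _; move/allP: hr => /(_ r rin).
  - by rewrite /= rc.
  - rewrite /= (ltW c0) /=; apply/allP => r rin.
    by apply: ltW; move/allP: hr' => /(_ r rin).
  - by rewrite /= add0n add1n ltnS.
exists rs; split => //.
- apply/allP => r rin; move/allP: hr' => /(_ r rin); exact: ltW.
Qed.


Lemma deriv_neq0 (p : {poly R}) : (1 < size p)%N -> p^`() != 0.
Proof.
move=> sp; apply/eqP => h; have := congr1 (fun r : {poly R} => r`_(size p).-2) h.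
rewrite /= coef_deriv coef0 prednK; last by case: (size p) sp => // [[|n]].
move=> /eqP.
rewrite mulrn_eq0 /= -lead_coefE lead_coef_eq0 -size_poly_eq0.
by case: (size p) sp => // [[|n]].
Qed.

Lemma crit_bound (p : {poly R}) ts : sorted <%R ts -> (1 < size p)%N ->
  (evs (map tosg (diffs (map (horner p) ts))) <= (size p).-2)%N.
Proof.
move=> st sp; have [xis [sx _ ex]] := stage1 p st.
rewrite -ex; have [rs [sr ar _ er]] := stage2 p^`() sx.
apply: (leq_trans er).
have := max_poly_roots (deriv_neq0 sp) ar (lt_sorted_uniq sr).
have := lt_size_deriv (p := p); rewrite -size_poly_eq0.
case: (size p) sp => // [[|n]] // _ /(_ isT) h1 h2.
by rewrite /= -ltnS; apply: leq_trans h2 _; rewrite -ltnS.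
Qed.

End RealPart.

Record gap := Gap { gX : typ; gY : typ; ga : sg; gb : sg }.
Definition allowedg g := allowed (gX g) (gY g) (ga g) (gb g).
Definition Hg g := Hf (gX g) (gY g) (ga g) (gb g).

Fixpoint chain (l : seq gap) : bool :=
  match l with
  | g :: ((g' :: _) as t) => typ_eqb (gY g) (gX g') && chain t
  | _ => true
  end.

Lemma typ_eqbP X Y : typ_eqb X Y -> X = Y.
Proof. by case: X; case: Y. Qed.

Lemma gaps_count g t : all allowedg (g :: t) -> chain (g :: t) ->
  (size (g :: t) + Hg g <= evs (map ga (g :: t)) + evs (map gb (g :: t)) + 1)%N.
Proof.
elim: t g => [|g' t IH] g.
  move=> al _; have /andP[ag _] := al; have := base_ok ag.
  have evs1 : forall a, evs [:: a] = isz a by case.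
  rewrite (_ : map ga [:: g] = [:: ga g]) // (_ : map gb [:: g] = [:: gb g]) // !evs1.
  rewrite /Hg (_ : size [:: g] = 1%N) //; lia.
move=> al ch.
have /andP[ag at'] := al; have /andP[eq ch'] := ch.
have := IH g' at' ch'; have /andP[ag' _] := at'.
have := step_ok ag (_ : allowed (gY g) (gY g') (ga g') (gb g')).
rewrite (typ_eqbP eq) => /(_ ag').
have E : forall (f : gap -> sg), evs (map f [:: g, g' & t]) =
  (isz (f g) + oppb (f g) (f g') + evs (map f (g' :: t)))%N by [].
rewrite !E /Hg (typ_eqbP eq) (_ : size [:: g, g' & t] = (size (g' :: t)).+1) //; lia.
Qed.

Section Bridge.
Variable R : rcfType.

Definition typR (p : R * R) : bool :=
  [|| (p.1 == 1) && (1 < p.2), (p.1 == -1) && (p.2 < -1),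
      (p.2 == 1) && (1 < p.1) | (p.2 == -1) && (p.1 < -1)].

Definition ty (p : R * R) : typ :=
  if p.1 == 1 then GP else if p.1 == -1 then GM else if p.2 == 1 then HP else HM.

Lemma m1_neq1 : ((-1 : R) == 1) = false.
Proof. by apply/negbTE/eqP => h; have : (0:R) < 1 by []; lra. Qed.

Lemma ty_GP p : p.1 = 1 -> ty p = GP.
Proof. by rewrite /ty => ->; rewrite eqxx. Qed.
Lemma ty_GM p : p.1 = -1 -> ty p = GM.
Proof. by rewrite /ty => ->; rewrite eqxx m1_neq1. Qed.
Lemma ty_HP p : p.2 = 1 -> 1 < p.1 -> ty p = HP.
Proof.
rewrite /ty => -> h; rewrite eqxx.
have -> : (p.1 == 1) = false by apply/negbTE/eqP => e; lra.
have -> : (p.1 == -1) = false by apply/negbTE/eqP => e; lra.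
by [].
Qed.
Lemma ty_HM p : p.2 = -1 -> p.1 < -1 -> ty p = HM.
Proof.
rewrite /ty => -> h.
have -> : (p.1 == 1) = false by apply/negbTE/eqP => e; lra.
have -> : (p.1 == -1) = false by apply/negbTE/eqP => e; lra.
by rewrite m1_neq1.
Qed.

Lemma allowed_ty p q : typR p -> typR q ->
  allowed (ty p) (ty q) (tosg (q.1 - p.1)) (tosg (q.2 - p.2)).
Proof.
rewrite /typR.
move=> /or4P[/andP[/eqP a1 a2]|/andP[/eqP a1 a2]|/andP[/eqP a1 a2]|/andP[/eqP a1 a2]];
[rewrite (ty_GP a1)|rewrite (ty_GM a1)|rewrite (ty_HP a1 a2)|rewrite (ty_HM a1 a2)];
move=> /or4P[/andP[/eqP b1 b2]|/andP[/eqP b1 b2]|/andP[/eqP b1 b2]|/andP[/eqP b1 b2]];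
[rewrite (ty_GP b1)|rewrite (ty_GM b1)|rewrite (ty_HP b1 b2)|rewrite (ty_HM b1 b2)
 |rewrite (ty_GP b1)|rewrite (ty_GM b1)|rewrite (ty_HP b1 b2)|rewrite (ty_HM b1 b2)
 |rewrite (ty_GP b1)|rewrite (ty_GM b1)|rewrite (ty_HP b1 b2)|rewrite (ty_HM b1 b2)
 |rewrite (ty_GP b1)|rewrite (ty_GM b1)|rewrite (ty_HP b1 b2)|rewrite (ty_HM b1 b2)];
rewrite /tosg;
case: (ltgtP (q.1 - p.1) 0) => h1; case: (ltgtP (q.2 - p.2) 0) => h2 //=; exfalso; lra.
Qed.

End Bridge.

Section Pts.
Variable R : rcfType.

Fixpoint gaps_of (s : seq (R * R)) : seq gap :=
  match s with
  | p :: ((q :: _) as t) =>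
      Gap (ty p) (ty q) (tosg (q.1 - p.1)) (tosg (q.2 - p.2)) :: gaps_of t
  | _ => [::]
  end.

Lemma gaps_a s : map ga (gaps_of s) = map (@tosg R) (diffs (map fst s)).
Proof. by elim: s => [|p [|q t] IH] //=; rewrite -IH. Qed.

Lemma gaps_b s : map gb (gaps_of s) = map (@tosg R) (diffs (map snd s)).
Proof. by elim: s => [|p [|q t] IH] //=; rewrite -IH. Qed.

Lemma typ_eqb_refl X : typ_eqb X X. Proof. by case: X. Qed.

Lemma gaps_chain s : chain (gaps_of s).
Proof.
elim: s => [|p [|q [|r t]] IH] //=.
by rewrite typ_eqb_refl; move: IH => /=.
Qed.

Lemma gaps_allowed s : all (@typR R) s -> all allowedg (gaps_of s).
Proof.
elim: s => [|p [|q t] IH] //= /andP[tp /andP[tq tt]].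
have := IH; rewrite /= tq tt /= => /(_ isT) h.
by rewrite {1}/allowedg /= allowed_ty.
Qed.

Lemma size_gaps s : size (gaps_of s) = (size s).-1.
Proof. by elim: s => [|p [|q t] IH] //=; rewrite IH. Qed.

Lemma pts_bound s : all (@typR R) s ->
  (size s <= evs (map (@tosg R) (diffs (map fst s))) + evs (map (@tosg R) (diffs (map snd s))) + 2)%N.
Proof.
case: s => [|p [|q t]] al //.
have := gaps_count (g := Gap (ty p) (ty q) (tosg (q.1 - p.1)) (tosg (q.2 - p.2)))
  (t := gaps_of (q :: t)).
have -> : Gap (ty p) (ty q) (tosg (q.1 - p.1)) (tosg (q.2 - p.2)) :: gaps_of (q :: t)
  = gaps_of [:: p, q & t] by [].
rewrite gaps_a gaps_b size_gaps => /(_ (gaps_allowed al) (gaps_chain _)).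
rewrite /=; lia.
Qed.


Lemma real_count (g h : {poly R}) (ts : seq R) : sorted <%R ts ->
  (1 < size g)%N -> (1 < size h)%N ->
  all (fun t => typR (g.[t], h.[t])) ts ->
  (size ts <= (size g).-1 + (size h).-1)%N.
Proof.
move=> st sg sh al.
have := pts_bound (s := map (fun t => (g.[t], h.[t])) ts).
rewrite all_map size_map => /(_ al).
rewrite -!map_comp /comp /=.
have := crit_bound st sg; have := crit_bound st sh.
have E1 : map (fun x => g.[x]) ts = map (horner g) ts by [].
have E2 : map (fun x => h.[x]) ts = map (horner h) ts by [].
rewrite ?E1 ?E2.
move: sg sh; case: (size g) => [|[|a]] //; case: (size h) => [|[|b]] // _ _ /=.
lia.
Qed.

End Pts.

Lemma int_prime_factor (z1 z2 : int) (p : nat) : prime p -> z1 * z2 = p%:Z ->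
  [|| (z1 == 1) && (1 < z2), (z1 == -1) && (z2 < -1),
      (z2 == 1) && (1 < z1) | (z2 == -1) && (z1 < -1)].
Proof.
move=> pp e.
have p2 : (1 < p)%N := prime_gt1 pp.
have ab : (`|z1| * `|z2|)%N = p by rewrite -abszM e.
have : (`|z1| = 1)%N \/ (`|z2| = 1)%N.
  have d1 : (`|z1| %| p)%N by rewrite -ab dvdn_mulr.
  case/primeP: pp => _ hp.
  move/hp: d1 => /orP[/eqP h1|/eqP h1]; [by left|right].
  by move: ab; rewrite h1 -{2}[p]muln1 => /eqP; rewrite eqn_pmul2l ?(ltnW p2) // => /eqP.
case=> h.
- have : z1 = 1 \/ z1 = -1 by lia.
  by case=> hz; rewrite hz in e *; [have -> : z2 = p%:Z by lia | have -> : z2 = - p%:Z by lia];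
     rewrite ?eqxx /=; lia.
- have : z2 = 1 \/ z2 = -1 by lia.
  by case=> hz; rewrite hz in e *; [have -> : z1 = p%:Z by lia | have -> : z1 = - p%:Z by lia];
     rewrite ?eqxx /=; lia.
Qed.

Lemma typR_int (R : rcfType) (z1 z2 : int) :
  [|| (z1 == 1) && (1 < z2), (z1 == -1) && (z2 < -1),
      (z2 == 1) && (1 < z1) | (z2 == -1) && (z1 < -1)] ->
  typR ((z1%:~R : R), (z2%:~R : R)).
Proof.
rewrite /typR /= -[1 : R]/((1:int)%:~R) -[-1 : R]/((-1:int)%:~R) !eqr_int !ltr_int.
done.
Qed.

Lemma part_i (n : nat) (f g h : {poly rat}) : size f = n.+1 -> f = g * h ->
  int_valued g -> int_valued h -> (1 < size g)%N -> (1 < size h)%N -> Pplus_le f n.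
Proof.
move=> sf fgh ig ih sg sh s us hs.
pose gR := map_poly (ratr : rat -> realalg) g.
pose hR := map_poly (ratr : rat -> realalg) h.
pose ss := sort <=%R s.
pose ts := map (fun m : int => (m%:~R : realalg)) ss.
have st : sorted <%R ts.
  apply: (homo_sorted (e := <%R)); first by move=> x y; rewrite ltr_int.
  by rewrite lt_sorted_uniq_le sort_uniq us (sort_sorted (@le_total _ int)).
have al : all (fun t => typR (gR.[t], hR.[t])) ts.
  apply/allP => t /mapP[m min ->]; rewrite mem_sort in min.
  have [p [pp fp]] := hs m min.
  have [z1 e1] := ig m; have [z2 e2] := ih m.
  have ez : z1 * z2 = p%:Z.
    apply: (@intr_inj rat); rewrite rmorphM /= -e1 -e2 -hornerM -fgh fp.
    by rewrite -[p%:R]/((p%:Z)%:~R).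
  have -> : (m%:~R : realalg) = ratr (m%:~R : rat) by rewrite /ratr numq_int denq_int divr1.
  rewrite !horner_map e1 e2 !rmorph_int.
  exact: typR_int (int_prime_factor pp ez).
have := real_count st _ _ al.
have sgR : size gR = size g by apply: size_map_inj_poly; [exact: fmorph_inj|exact: rmorph0].
have shR : size hR = size h by apply: size_map_inj_poly; [exact: fmorph_inj|exact: rmorph0].
rewrite sgR shR.
move=> /(_ sg sh); rewrite size_map size_sort.
have gn0 : g != 0 by rewrite -size_poly_gt0 ltnW.
have hn0 : h != 0 by rewrite -size_poly_gt0 ltnW.
move: sf; rewrite fgh size_mul // => sf.
move: sf sg sh; case: (size g) => [|[|a]] //; case: (size h) => [|[|b]] // sf _ _ /=.
lia.
Qed.

Section Dir.
Variable Ph : nat -> {poly int}.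
Hypothesis Ph_prod : forall n, (0 < n)%N -> \prod_(d <- divisors n) Ph d = 'X^n - 1.
Hypothesis Ph_size : forall n, (0 < n)%N -> size (Ph n) = (totient n).+1.
Local Notation "''Phi_' n" := (Ph n) (at level 8, n at level 2, format "''Phi_' n").

Lemma Phi_prod_at (M : nat) (x : int) : (0 < M)%N ->
  x ^+ M - 1 = \prod_(d <- divisors M) ('Phi_d).[x].
Proof.
move=> M0; rewrite -horner_prod Ph_prod //.
by rewrite hornerD hornerN hornerXn hornerC.
Qed.

Lemma Phi_split (M d : nat) : (0 < M)%N -> (d %| M)%N -> d != M ->
  exists Rp : {poly int}, 'X^M - 1 = 'Phi_M * ('Phi_d * Rp).
Proof.
move=> M0 dM dneq.
have uM := divisors_uniq M.
have inM : M \in divisors M by rewrite -dvdn_divisors.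
have ind : d \in divisors M by rewrite -dvdn_divisors.
rewrite -Ph_prod // (bigD1_seq M inM uM) /=.
exists (\prod_(i <- divisors M | (i != M) && (i != d)) 'Phi_i).
congr (_ * _).
rewrite -big_filter (bigD1_seq d) ?filter_uniq //; last by rewrite mem_filter dneq.
by rewrite big_filter_cond.
Qed.

Lemma dirichlet1 (M : nat) : (0 < M)%N -> exists q, prime q /\ (M %| q.-1)%N.
Proof.
move=> M0.
have [->|M1] := eqVneq M 1%N; first by exists 2%N.
have M2 : (1 < M)%N by case: M M0 M1 => [|[|m]].
pose Phi := 'Phi_M.
have sPhi : (1 < size Phi)%N by rewrite Ph_size // ltnS totient_gt0.
have uM := divisors_uniq M.
have inM : M \in divisors M by rewrite -dvdn_divisors.
have [X0 eX0] : exists X : int, Phi.[0] * X = -1.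
  have := Phi_prod_at 0 M0; rewrite expr0n (gtn_eqF M0) sub0r (bigD1_seq M inM uM) /=.
  by move=> e; eexists; rewrite e.
pose Q := Phi * ((Phi - 1) * (Phi + 1)).
have Phin0 : Phi != 0 by rewrite -size_poly_gt0 ltnW.
have sPm : size (Phi - 1) = size Phi.
  by rewrite size_addl // size_opp size_poly1.
have sPp : size (Phi + 1) = size Phi.
  by rewrite size_addl // size_poly1.
have Qn0 : Q != 0.
  rewrite /Q !mulf_neq0 // -size_poly_gt0 ?sPm ?sPp ltnW //.
have [t [t1 Qt]] : exists t, (0 < t)%N /\ ~~ root Q (M * t)%:Z.
  case: (boolP (all (fun t => root Q (M * t)%:Z) (iota 1 (size Q)))) => [al|].
    exfalso.
    have : (size (map (fun t => (M * t)%:Z) (iota 1 (size Q))) < size Q)%N.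
      apply: max_poly_roots Qn0 _ _; first by rewrite all_map.
      rewrite map_inj_uniq ?iota_uniq // => x y /eqP; rewrite eqz_nat eqn_pmul2l //.
      by move/eqP.
    by rewrite size_map size_iota ltnn.
  rewrite -has_predC => /hasP[t tin nr]; exists t; split => //.
  by move: tin; rewrite mem_iota => /andP[].
pose a := (M * t)%N.
pose A := Phi.[a%:Z].
have [A0 [A1 Am1]] : [/\ A != 0, A - 1 != 0 & A + 1 != 0].
  by move: Qt; rewrite /root /Q !hornerM !hornerD hornerN hornerC !mulf_eq0 !negb_or => /and3P[].
have N2 : (1 < `|A|)%N.
  by move: A0 A1 Am1 => /eqP ? /eqP ? /eqP ?; lia.
pose q := pdiv `|A|.
have pq : prime q := pdiv_prime N2.
have qA : (q %| `|A|)%N := pdiv_dvd _.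
have qAz : (q%:Z %| A)%Z by rewrite dvdzE.
have [Qp eQ] : exists Qp : {poly int}, Phi - (Phi.[0])%:P = Qp * ('X - 0%:P).
  apply/factor_theorem; by rewrite /root hornerD hornerN hornerC subrr.
have eA : A - Phi.[0] = Qp.[a%:Z] * a%:Z.
  have := congr1 (fun P => P.[a%:Z]) eQ.
  by rewrite /= hornerD hornerN hornerC hornerM hornerXsubC subr0.
have qna : ~~ (q %| a)%N.
  apply/negP => qa.
  have qaz : (q%:Z %| a%:Z)%Z by rewrite dvdzE.
  have : (q%:Z %| Phi.[0])%Z.
    have -> : Phi.[0] = A - (A - Phi.[0]) by rewrite opprB addrC subrK.
    by rewrite eA rpredB // dvdz_mull.
  move=> /(dvdz_mulr X0); rewrite eX0 dvdzE /= dvdn1 => /eqP q1.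
  by move: pq; rewrite q1.
have qnM : ~~ (q %| M)%N.
  by apply: contra qna => qM; apply: dvdn_trans qM _; rewrite dvdn_mulr.
pose F := 'F_q.
pose al : F := a%:R.
have qchar : q \in [pchar F] := pchar_Fp pq.
have aln0 : al != 0 by rewrite /al -(dvdn_pcharf qchar).
have evalF : forall P : {poly int}, (map_poly (intr : int -> F) P).[al] = (P.[a%:Z])%:~R.
  by move=> P; rewrite -horner_map.
have Aq : (A%:~R : F) = 0.
  move/dvdzP: qAz => [k ->].
  by rewrite rmorphM /= -[(q%:Z)%:~R]/(q%:R : F) (pchar_Fp_0 pq) mulr0.
have powE : forall k, ((a%:Z ^+ k - 1)%:~R : F) = al ^+ k - 1.
  by move=> k; rewrite rmorphB rmorphXn /= rmorph1.
have aM : al ^+ M = 1.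
  have := congr1 (fun z : int => (z%:~R : F)) (Phi_prod_at a%:Z M0).
  rewrite /= powE (bigD1_seq M inM uM) /= rmorphM /= -/Phi -/A Aq mul0r.
  by move/eqP; rewrite subr_eq0 => /eqP.
have aq : al ^+ q.-1 = 1.
  have h := expf_card al; rewrite card_Fp // in h.
  have : al ^+ q.-1.+1 = al by rewrite prednK // prime_gt0.
  by move=> h'; apply: (mulfI aln0); rewrite mulr1 -exprS h'.
pose e := gcdn M q.-1.
have ae : al ^+ e = 1.
  have [u _ /dvdnP[w hw]] := Bezoutl q.-1 M0.
  have := congr1 (fun k => al ^+ k) hw; rewrite /= exprD mulnC exprM aq expr1n mulr1.
  by rewrite mulnC exprM aM expr1n.
have eM : (e %| M)%N := dvdn_gcdl _ _.
have [eqeM | neM] := eqVneq e M.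
  by exists q; split => //; rewrite -eqeM dvdn_gcdr.
exfalso.
have e0 : (0 < e)%N by rewrite gcdn_gt0 M0.
have [d din dz] : exists2 d, d \in divisors e & ((('Phi_d).[a%:Z])%:~R : F) = 0.
  have := congr1 (fun z : int => (z%:~R : F)) (Phi_prod_at a%:Z e0).
  cbv beta; rewrite powE ae subrr rmorph_prod => /esym/eqP; rewrite prodf_seq_eq0.
  by move=> /hasP[d din /andP[_ /eqP dz]]; exists d.
have de : (d %| e)%N by rewrite dvdn_divisors.
have dM : (d %| M)%N := dvdn_trans de eM.
have dneq : d != M.
  rewrite neq_ltn; apply/orP; left; apply: leq_ltn_trans (dvdn_leq e0 de) _.
  by rewrite ltn_neqAle neM (dvdn_leq M0 eM).
have [Rp eR] := Phi_split M0 dM dneq.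
have := congr1 (fun P => ((map_poly (intr : int -> F) P)^`()).[al]) eR.
cbv beta; rewrite !rmorphM !derivM !hornerD !hornerM !evalF -/Phi -/A Aq dz.
rewrite !(mul0r, mulr0, addr0).
rewrite deriv_map evalF derivB derivXn derivC subr0 hornerMn hornerXn rmorphMn rmorphXn.
move/eqP; rewrite -mulr_natr mulf_eq0 expf_eq0 (negbTE aln0) andbF orFb.
by rewrite -(dvdn_pcharf qchar) (negbTE qnM).
Qed.

End Dir.

Lemma dirichlet (M : nat) : (0 < M)%N -> exists q, prime q /\ (M %| q.-1)%N.
Proof.
apply: (@dirichlet1 Cyclotomic) => n n0; first exact: prod_Cyclotomic.
exact: size_Cyclotomic.
Qed.

Local Notation pZtoQ := (map_poly (intr : int -> rat)).

Lemma int_valued_map (P : {poly int}) : int_valued (pZtoQ P).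
Proof. by move=> m; exists P.[m]; rewrite -horner_map. Qed.

Lemma int_coeffs_map f : int_coeffs f -> exists F : {poly int}, f = pZtoQ F.
Proof.
move=> ic; exists (map_poly numq f); apply/polyP => i.
rewrite coef_map /= coef_map_id0 //; have [z ->] := ic i.
by rewrite numq_int.
Qed.

Lemma part_iii n f : (1 < n)%N -> int_coeffs f -> size f = n.+1 ->
  ~ irreducible_poly f -> Pplus_le f n.
Proof.
move=> hn ic sf nirr.
have [F eF] := int_coeffs_map ic.
have fn0 : f != 0 by rewrite -size_poly_gt0 sf.
have [q [sq qd nq]] : exists q : {poly rat}, [/\ size q != 1%N, q %| f & ~~ (q %= f)].
  apply: NNPP => H; apply: nirr; split; first by rewrite sf; lia.
  move=> q sq qd; case: (boolP (q %= f)) => // nq.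
  by exfalso; apply: H; exists q.
have qn0 : q != 0 by apply: contraNneq fn0 => q0; move: qd; rewrite q0 dvd0p.
have qd' : q %| pZtoQ F by rewrite -eF.
move: qd' => /dvdpP_rat_int [p1 [a a0 eq] [r eFr]].
have ef : f = pZtoQ p1 * pZtoQ r by rewrite eF eFr rmorphM.
have sp1 : size (pZtoQ p1) = size q by rewrite eq size_scale.
have rn0 : pZtoQ r != 0 by apply: contraNneq fn0 => r0; rewrite ef r0 mulr0.
have sr : size (pZtoQ r) != 1%N.
  apply/negP => /eqP sr1; have er := size1_polyC (eq_leq sr1).
  move: nq; rewrite ef er mulrC mul_polyC eq.
  apply/negP/negPn; apply: eqp_trans (eqp_scale _ a0) _.
  rewrite eqp_sym; apply: eqp_scale.
  by move: rn0; rewrite {1}er polyC_eq0.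
have sp1' : size p1 = size q by rewrite eq size_scale // size_rat_int_poly.
have sr' : size r = size (pZtoQ r) by rewrite size_rat_int_poly.
apply: (@part_i n f (pZtoQ p1) (pZtoQ r)) => //.
- exact: int_valued_map.
- exact: int_valued_map.
- rewrite size_rat_int_poly sp1'; move: sq qn0; rewrite -size_poly_eq0; lia.
- rewrite size_rat_int_poly sr'; move: sr rn0; rewrite -size_poly_eq0; lia.
Qed.

Lemma exists_primes L : exists ps : seq nat, [/\ uniq ps, all prime ps & size ps = L].
Proof.
elim: L => [|L [ps [u a s]]]; first by exists [::].
have [p lt pp] := prime_above (\max_(x <- ps) x).
exists (p :: ps); split => //=; last by rewrite s.
- rewrite u andbT; apply/negP => pin.
  by move: lt; rewrite ltnNge (@leq_bigmax_seq _ ps xpredT (fun x => x) p pin isT).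
- by rewrite pp.
Qed.

Lemma prod_one_minus (ps : seq nat) : all (fun p => 0 < p)%N ps ->
  \prod_(p <- ps) (1 - p%:Z) = (-1) ^+ size ps * (\prod_(p <- ps) p.-1)%N%:Z.
Proof.
elim: ps => [|p ps IH] /=; first by rewrite !big_nil expr0 mul1r.
move=> /andP[p0 a]; rewrite !big_cons IH // PoszM predn_int // exprS.
ring.
Qed.

Lemma construction n : (2 <= n)%N ->
  exists (H : {poly int}) (s : seq int),
  [/\ size H = n, uniq s, size s = n &
      forall m, m \in s -> exists p, prime p /\ m * H.[m] = p%:Z].
Proof.
move=> hn.
have [ps [ups aps sps]] := exists_primes n.-1.
have aps0 : all (fun p => 0 < p)%N ps.
  by apply/allP => p pin; apply: prime_gt0; move/allP: aps => /(_ p pin).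
pose M := (\prod_(p <- ps) p.-1)%N.
have M0 : (0 < M)%N.
  rewrite /M; elim: (ps) (aps) => [|p ps' IH]; rewrite ?big_nil ?big_cons //=.
  move=> /andP[pp a]; rewrite muln_gt0 IH // andbT -ltnS prednK ?prime_gt1 // prime_gt0 //.
have [q [pq Mq]] := dirichlet M0.
pose k := (q.-1 %/ M)%N.
have ek : (k * M = q.-1)%N by rewrite divnK.
have k0 : (0 < k)%N.
  have : (0 < q.-1)%N by rewrite -ltnS prednK ?prime_gt1 // prime_gt0.
  by rewrite -ek muln_gt0 => /andP[].
pose c : int := (-1) ^+ size ps * k%:Z.
have c0 : c != 0 by rewrite /c mulf_neq0 ?expf_neq0 ?oppr_eq0 ?oner_eq0 // eqz_nat -lt0n.
pose P := \prod_(p <- ps) ('X - (p%:Z)%:P).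
pose H := 1 + c *: P.
have sP : size P = n by rewrite size_prod_XsubC sps prednK //; lia.
exists H, (1 :: map (fun p => p%:Z) ps); split.
- rewrite /H addrC size_addl size_scale // sP //.
  by rewrite size_poly1; lia.
- rewrite /= map_inj_uniq ?ups ?andbT; last by move=> x y [].
  apply/mapP => -[p pin] /eqP; rewrite eqz_nat => /eqP p1.
  by move/allP: aps => /(_ p pin); rewrite -p1.
- by rewrite /= size_map sps prednK //; lia.
move=> m; rewrite inE => /orP[/eqP ->|/mapP[p pin ->]].
  exists q; split => //; rewrite mul1r /H hornerD hornerC hornerZ.
  rewrite /P horner_prod.
  under eq_bigr do rewrite hornerXsubC.
  rewrite prod_one_minus // /c mulrACA.
  have -> : ((-1 : int) ^+ size ps) * ((-1) ^+ size ps) = 1.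
    by rewrite -exprD -signr_odd oddD addbb.
  rewrite mul1r -PoszM ek -PoszD add1n prednK // prime_gt0 //.
exists p; split; first by move/allP: aps => /(_ p pin).
rewrite /H hornerD hornerC hornerZ /P horner_prod (bigD1_seq p pin ups) /=.
by rewrite hornerXsubC subrr mul0r mulr0 addr0 mulr1.
Qed.


Lemma constr_f n : (2 <= n)%N -> exists H : {poly int},
  [/\ int_coeffs (pZtoQ ('X * H)), size (pZtoQ ('X * H)) = n.+1,
      pZtoQ ('X * H) = pZtoQ 'X * pZtoQ H, (1 < size (pZtoQ H))%N &
      exists s : seq int, [/\ uniq s, (forall m, m \in s -> prime_value_at (pZtoQ ('X * H)) m)
                        & size s = n]].
Proof.
move=> hn; have [H [s [sH us ss hs]]] := construction hn.
have Hn0 : H != 0 by rewrite -size_poly_gt0 sH; lia.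
exists H; split.
- by move=> i; exists (('X * H)`_i); rewrite coef_map.
- by rewrite size_rat_int_poly mulrC size_mulX // sH.
- by rewrite rmorphM.
- by rewrite size_rat_int_poly sH.
exists s; split => // m min.
have [p [pp e]] := hs m min.
exists p; split => //.
have -> : (pZtoQ ('X * H)).[m%:~R] = (('X * H).[m])%:~R by rewrite horner_map.
by rewrite hornerM hornerX e.
Qed.

Theorem theorem3 (n : nat) (hn : (2 <= n)%N) :
  (forall f g h : {poly rat},
      size f = n.+1 -> f = g * h ->
      int_valued g -> int_valued h -> (1 < size g)%N -> (1 < size h)%N ->
      Pplus_le f n)
  /\
  (exists f : {poly rat},
      [/\ int_coeffs f, size f = n.+1, ~ irreducible_poly f & Pplus_eq f n])
  /\
  (forall f : {poly rat},
      int_coeffs f -> size f = n.+1 -> ~ irreducible_poly f -> Pplus_le f n)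
  /\
  (exists f g h : {poly rat},
      [/\ size f = n.+1, f = g * h, int_valued g /\ int_valued h,
          (1 < size g)%N /\ (1 < size h)%N & Pplus_eq f n]).
Proof.
have [H [ic sf ef sH hs]] := constr_f hn.
have sX : (1 < size (pZtoQ 'X))%N by rewrite size_rat_int_poly size_polyX.
have Ple : Pplus_le (pZtoQ ('X * H)) n.
  by apply: (@part_i n _ (pZtoQ 'X) (pZtoQ H)) => //; apply: int_valued_map.
split; first by move=> f g h; apply: part_i.
split.
  exists (pZtoQ ('X * H)); split => //.
  move=> [_ irr].
  have := irr (pZtoQ 'X); rewrite size_rat_int_poly size_polyX => /(_ isT).
  rewrite ef dvdp_mulr // => /(_ isT) /eqp_size.
  by rewrite -ef sf size_rat_int_poly size_polyX; lia.
split; first by move=> f; apply: part_iii; lia.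
exists (pZtoQ ('X * H)), (pZtoQ 'X), (pZtoQ H); split => //.
by split; apply: int_valued_map.
Qed.
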